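(* Let $\mathbb{E}$ be a finite-dimensional real inner product space and let $f_i:\mathbb{E}\to(-\infty,\infty]$, $i=1,\ldots,M$, be convex, directionally differentiable, continuous on their domains, with $\mathrm{dom} f_i$ closed, and suppose $F(x):=\min_{i\in[M]}f_i(x)$ is continuous on $\mathrm{dom} F$. If $x^*\in\mathrm{dom} F$ is a d-stationary point of the problem $\min_{x\in\mathbb{E}}F(x)$, then $x^*$ is a local minimizer of $F$.
   Context: $\mathrm{dom}\, g=\{x\mid g(x)<\infty\}$. Feasible cone: $\mathcal{F}(x;\mathcal{C})=\{d\mid \exists\varsigma'>0:\ x+\varsigma d\in\mathcal{C}\ \forall\varsigma\in(0,\varsigma')\}$ if $x\in\mathcal{C}$, else $\emptyset$. Directional differentiability: $g'(x;d)=\lim_{\varsigma\searrow0}(g(x+\varsigma d)-g(x))/\varsigma$ exists in $\mathbb{R}$ for all $x\in\mathrm{dom}\, g$, $d\in\mathcal{F}(x;\mathrm{dom}\, g)$. A point $x^*\in\mathrm{dom} F$ is a d-stationary point of $\min F$ if $F'(x^*;d)\ge0$ for all $d\in\mathcal{F}(x^*;\mathrm{dom} F)$. *)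

(* Defs.v *)
From HB Require Import structures.
From mathcomp Require Import all_boot all_order all_algebra.
From mathcomp Require Import all_classical all_reals all_analysis.
Set Implicit Arguments. Unset Strict Implicit. Unset Printing Implicit Defensive.
Import Order.TTheory GRing.Theory Num.Theory.
Import numFieldNormedType.Exports.
Local Open Scope classical_set_scope.
Local Open Scope ring_scope.

Section Defs.
Context {R : realType} {n : nat}.
Local Notation E := 'rV[R]_n.

Definition edom (g : E -> \bar R) : set E := [set x | (g x < +oo)%E].

Definition feas_cone (C : set E) (x : E) : set E :=
  [set d | C x /\ exists2 s' : R, 0 < s' &
                 forall s : R, 0 < s < s' -> C (x + s *: d)].

Definition ddir (g : E -> \bar R) (x d : E) (l : R) : Prop :=
  (fun s : R => (fine (g (x + s *: d)) - fine (g x)) / s) @ 0^'+ --> l.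

Definition dir_differentiable (g : E -> \bar R) : Prop :=
  forall x d, edom g x -> feas_cone (edom g) x d -> exists l : R, ddir g x d l.

Definition econvex (g : E -> \bar R) : Prop :=
  forall x y (t : R), edom g x -> edom g y -> 0 <= t <= 1 ->
    (g (t *: x + (1 - t) *: y)%R <= t%:E * g x + (1 - t)%:E * g y)%E.

Definition d_stationary (g : E -> \bar R) (xs : E) : Prop :=
  edom g xs /\
  forall d, feas_cone (edom g) xs d -> exists2 l : R, ddir g xs d l & 0 <= l.

Definition local_minimizer (g : E -> \bar R) (xs : E) : Prop :=
  \forall x \near xs, (g xs <= g x)%E.

Definition fmin (M : nat) (f : 'I_M -> E -> \bar R) : E -> \bar R :=
  fun x => \big[Order.min/+oo%E]_(i < M) f i x.

End Defs.

(* Main.v *)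
Require Import Defs.
From HB Require Import structures.
From mathcomp Require Import all_boot all_order all_algebra.
From mathcomp Require Import all_classical all_reals all_analysis.
From mathcomp Require Import ring lra.
Import Order.TTheory GRing.Theory Num.Theory.
Import numFieldNormedType.Exports.
Local Open Scope classical_set_scope.
Local Open Scope ring_scope.

Lemma ebar_fine (R : realType) (y : \bar R) :
  (-oo < y)%E -> (y < +oo)%E -> y = (fine y)%:E.
Proof. by case: y. Qed.

Lemma nlt_pinfty_le (R : realType) (z y : \bar R) : ~ (y < +oo)%E -> (z <= y)%E.
Proof.
move=> h; rewrite leNgt; apply/negP => h'; apply: h.
exact: lt_le_trans h' (leey _).
Qed.

Theorem mainTheorem3 (R : realType) (n M : nat) (f : 'I_M -> 'rV[R]_n -> \bar R)
  (xs : 'rV[R]_n) :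
  (forall i x, (-oo < f i x)%E) ->
  (forall i, econvex (f i)) ->
  (forall i, dir_differentiable (f i)) ->
  (forall i, {within edom (f i), continuous (f i)}) ->
  (forall i, closed (edom (f i))) ->
  {within edom (fmin f), continuous (fmin f)} ->
  d_stationary (fmin f) xs ->
  local_minimizer (fmin f) xs.
Proof.
move=> fgt fconv _ fcont fclosed _ [domxs stat].
set F := fmin f.
have Fgt : forall x, (-oo < F x)%E.
  move=> x; rewrite /F /fmin; elim/big_ind: _ => //.
  by move=> a b ha hb; rewrite lt_min ha hb.
have Fle : forall i x, (F x <= f i x)%E.
  by move=> i x; rewrite /F /fmin (bigD1 i) //= ge_min lexx.
have key : forall i, \forall x \near xs, (F xs <= f i x)%E.
  move=> i.
  have := Fle i xs; rewrite le_eqVlt => /orP [/eqP hi | hi].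
  - apply: filterE => x.
    case: (pselect (f i x < +oo)%E) => hx; last exact: nlt_pinfty_le.
    have hxs : (f i xs < +oo)%E by rewrite -hi.
    set r := fine (F xs). set a := fine (f i x).
    have Er : F xs = r%:E by apply: ebar_fine.
    have Ea : f i x = a%:E by apply: ebar_fine.
    have Ers : f i xs = r%:E by rewrite -hi.
    set d := x - xs.
    have bnd : forall s : R, 0 <= s <= 1 ->
        (F (xs + s *: d)%R <= (s * a + (1 - s) * r)%:E)%E.
      move=> s hs.
      have -> : xs + s *: d = s *: x + (1 - s) *: xs.
        by rewrite /d scalerBr scalerBl scale1r addrCA.
      apply: le_trans (Fle i _) _.
      have := fconv i x xs s hx hxs hs.
      by rewrite Ea Ers -!EFinM -EFinD.
    have fd : feas_cone (edom F) xs d.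
      split => //; exists 1 => // s /andP[s0 s1].
      rewrite /edom /=.
      apply: le_lt_trans (bnd s _) _; last exact: ltry.
      by rewrite (ltW s0) (ltW s1).
    have [l hl l0] := stat d fd.
    have la : l <= a - r.
      rewrite -(cvg_lim _ hl) //.
      apply: limr_le; first by apply/cvg_ex; exists l.
      near=> s.
      have s0 : 0 < s by near: s; exact: nbhs_right_gt.
      have s1 : s < 1 by near: s; exact: nbhs_right_lt.
      have hb := bnd s ltac:(by rewrite (ltW s0) (ltW s1)).
      have fF : F (xs + s *: d) = (fine (F (xs + s *: d)))%:E.
        apply: ebar_fine => //; exact: le_lt_trans hb (ltry _).
      move: hb; rewrite fF lee_fin => hb.
      rewrite ler_pdivrMr //.
      have -> : (a - r) * s = s * a + (1 - s) * r - r by ring.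
      by rewrite lerD2r.
    by rewrite Er Ea lee_fin; lra.
  - case: (pselect (f i xs < +oo)%E) => hxs.
    + have c := (subspace_continuousP (edom (f i)) (f i)).1 (fcont i) xs hxs.
      have U : nbhs (f i xs) [set y | (F xs < y)%E].
        by apply: open_nbhs_nbhs; split => //; exact: open_ereal_gt_ereal.
      have H : \forall x \near xs, edom (f i) x -> (F xs < f i x)%E := c _ U.
      apply: filterS H => x hx.
      case: (pselect (f i x < +oo)%E) => hx'; last exact: nlt_pinfty_le.
      exact/ltW/hx.
    + have U : nbhs xs (~` edom (f i)).
        by apply: open_nbhs_nbhs; split => //; exact: closed_openC.
      apply: filterS U => x hx; exact: nlt_pinfty_le.
have H := filter_forall _ key.
rewrite /local_minimizer; near=> x; have Hx : forall i, (F xs <= f i x)%E by near: x; exact: H.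
rewrite [X in (_ <= X)%E]/fmin; elim/big_ind: _.
- exact: leey.
- by move=> a b ha hb; rewrite le_min ha hb.
- by move=> i _; exact: Hx.
Unshelve. all: by end_near.
Qed.
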